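(* Let $n\ge 4$ and let $\varepsilon:UV_n(2)\to\mathrm{GL}_{n+1}(\mathbb{C})$ be a nontrivial homogeneous $3$-local representation. Then, up to equivalence, $\varepsilon$ is equal to one of four representations $\varepsilon_j$ ($1\le j\le 4$) given by $\varepsilon_j(\rho_i)=\mathrm{diag}(I_{i-1},R^{(j)},I_{n-i-1})$, $\varepsilon_j(\sigma_{i,1})=\mathrm{diag}(I_{i-1},S_1^{(j)},I_{n-i-1})$, $\varepsilon_j(\sigma_{i,2})=\mathrm{diag}(I_{i-1},S_2^{(j)},I_{n-i-1})$ for all $1\le i\le n-1$, where (with $t\in\{1,2\}$): (1) $R^{(1)}=\begin{pmatrix}1&0&0\\0&0&r_6\\0&\frac1{r_6}&0\end{pmatrix}$, $S_t^{(1)}=\begin{pmatrix}1&0&0\\0&s_{5,t}&s_{6,t}\\0&s_{8,t}&s_{9,t}\end{pmatrix}$, with $r_6\ne0$ and $s_{5,t}s_{9,t}-s_{6,t}s_{8,t}\ne0$; (2) $R^{(2)}=\begin{pmatrix}0&r_2&0\\ \frac1{r_2}&0&0\\0&0&1\end{pmatrix}$, $S_t^{(2)}=\begin{pmatrix}s_{1,t}&s_{2,t}&0\\ s_{4,t}&s_{5,t}&0\\0&0&1\end{pmatrix}$, with $r_2\ne0$ and $s_{1,t}s_{5,t}-s_{2,t}s_{4,t}\ne0$; (3) $R^{(3)}=\begin{pmatrix}1&0&0\\ \frac1{r_6}&-1&r_6\\0&0&1\end{pmatrix}$, $S_t^{(3)}=\begin{pmatrix}1&0&0\\ s_{4,t}&s_{5,t}&r_6(1-r_6s_{4,t}-s_{5,t})\\0&0&1\end{pmatrix}$,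 with $r_6\ne0$ and $s_{5,t}\ne0$; (4) $R^{(4)}=\begin{pmatrix}1&r_2&0\\0&-1&0\\0&\frac1{r_2}&1\end{pmatrix}$, $S_t^{(4)}=\begin{pmatrix}1&r_2(1-s_{5,t}-r_2s_{8,t})&0\\0&s_{5,t}&0\\0&s_{8,t}&1\end{pmatrix}$, with $r_2\ne0$ and $s_{5,t}\ne0$. All parameters are complex numbers.
   Context: $UV_n(c)$ is the group with generators $\rho_i$ ($1\le i\le n-1$), $\sigma_{i,t}$ ($1\le i\le n-1$, $1\le t\le c$) and relations $\rho_i\rho_{i+1}\rho_i=\rho_{i+1}\rho_i\rho_{i+1}$, $\rho_i\rho_j=\rho_j\rho_i$ ($|i-j|\ge2$), $\rho_i^2=1$, $\sigma_{i,t}\sigma_{j,\ell}=\sigma_{j,\ell}\sigma_{i,t}$ ($|i-j|\ge2$), $\sigma_{i,t}\rho_j=\rho_j\sigma_{i,t}$ ($|i-j|\ge2$), $\rho_i\rho_{i+1}\sigma_{i,t}=\sigma_{i+1,t}\rho_i\rho_{i+1}$ ($1\le i\le n-2$). A representation $\theta:UV_n(2)\to\mathrm{GL}_{n+1}(\mathbb{C})$ is homogeneous $3$-local if there are $R,S_1,S_2\in\mathrm{GL}_3(\mathbb{C})$ with $\theta(\rho_i)=\mathrm{diag}(I_{i-1},R,I_{n-i-1})$, $\theta(\sigma_{i,t})=\mathrm{diag}(I_{i-1},S_t,I_{n-i-1})$ for all $i$ and $t=1,2$ (block diagonal, $I_r$ the $r\times r$ identity). Nontrivial means not the trivial representation;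 equivalence means conjugacy by a fixed invertible matrix. *)

(* Defs.v *)
(* Complex numbers are modelled as  R[i] = complex R  for a
   real field  R : realType  (real_closed's complex.v); with R the reals this
   is the field of complex numbers. *)
From HB Require Import structures.
From mathcomp Require Import all_boot all_order all_algebra.
From mathcomp Require Import reals complex.
Set Implicit Arguments. Unset Strict Implicit. Unset Printing Implicit Defensive.
Import Order.TTheory GRing.Theory Num.Theory.
Local Open Scope ring_scope.

Section Defs.
Variable C : fieldType.

Definition mx3 (a b c d e f g h k : C) : 'M[C]_3 :=
  \matrix_(i < 3, j < 3)
    nth 0 (nth [::] [:: [:: a; b; c]; [:: d; e; f]; [:: g; h; k]] i) j.

(* blk n i M = diag(I_{i-1}, M, I_{n-i-1}) in M_{n+1}, for 1 <= i <= n-1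
   (the 3x3 block occupies rows/columns i-1, i, i+1, 0-indexed). *)
Definition blk (n i : nat) (M : 'M[C]_3) : 'M[C]_n.+1 :=
  \matrix_(a < n.+1, b < n.+1)
    if ((i.-1 <= a < i.+2) && (i.-1 <= b < i.+2))%N
    then M (inord (a - i.-1)) (inord (b - i.-1))
    else (a == b)%:R.

(* The assignment respects all defining relations of UV_n(2), hence
   (von Dyck) defines a homomorphism UV_n(2) -> GL_{n+1}. Indices i, j
   range over 1 <= i, j <= n-1. *)
Definition is_UV2_rep (n : nat) (R S1 S2 : 'M[C]_3) : Prop :=
  let rho i := blk n i R in
  let sig t i := blk n i (if t == 1%N then S1 else S2) in
  let gen i := (1 <= i <= n.-1)%N in
  let far i j := (i.+2 <= j)%N || (j.+2 <= i)%N in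
      (forall i, (1 <= i <= n.-2)%N ->
         rho i *m rho i.+1 *m rho i = rho i.+1 *m rho i *m rho i.+1) /\
      (forall i j, gen i -> gen j -> far i j -> rho i *m rho j = rho j *m rho i) /\
      (forall i, gen i -> rho i *m rho i = 1%:M) /\
      (forall i j t l, gen i -> gen j -> far i j -> (1 <= t <= 2)%N ->
         (1 <= l <= 2)%N -> sig t i *m sig l j = sig l j *m sig t i) /\
      (forall i j t, gen i -> gen j -> far i j -> (1 <= t <= 2)%N ->
         sig t i *m rho j = rho j *m sig t i) /\
      (forall i t, (1 <= i <= n.-2)%N -> (1 <= t <= 2)%N ->
         rho i *m rho i.+1 *m sig t i = sig t i.+1 *m rho i *m rho i.+1).

Definition homog3local_rep (n : nat) (R S1 S2 : 'M[C]_3) : Prop :=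
  [/\ R \in unitmx, S1 \in unitmx, S2 \in unitmx & is_UV2_rep n R S1 S2].

Definition trivial_rep (n : nat) (R S1 S2 : 'M[C]_3) : Prop :=
  forall i, (1 <= i <= n.-1)%N ->
    [/\ blk n i R = 1%:M, blk n i S1 = 1%:M & blk n i S2 = 1%:M].

Definition equiv_rep (n : nat) (R S1 S2 R' S1' S2' : 'M[C]_3) : Prop :=
  exists2 P : 'M[C]_n.+1, P \in unitmx &
    forall i, (1 <= i <= n.-1)%N ->
      [/\ P *m blk n i R *m invmx P = blk n i R',
          P *m blk n i S1 *m invmx P = blk n i S1' &
          P *m blk n i S2 *m invmx P = blk n i S2'].

(* the four families; parameters indexed (s_{k,1}, s_{k,2}) = (a_k, b_k) *)
Definition eps1 (R S1 S2 : 'M[C]_3) : Prop :=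
  exists r6 a5 a6 a8 a9 b5 b6 b8 b9 : C,
    [/\ r6 != 0, a5 * a9 - a6 * a8 != 0 & b5 * b9 - b6 * b8 != 0] /\
     [/\         R = mx3 1 0 0  0 0 r6  0 r6^-1 0,
        S1 = mx3 1 0 0  0 a5 a6  0 a8 a9 &
        S2 = mx3 1 0 0  0 b5 b6  0 b8 b9].

Definition eps2 (R S1 S2 : 'M[C]_3) : Prop :=
  exists r2 a1 a2 a4 a5 b1 b2 b4 b5 : C,
    [/\ r2 != 0, a1 * a5 - a2 * a4 != 0 & b1 * b5 - b2 * b4 != 0] /\
     [/\         R = mx3 0 r2 0  r2^-1 0 0  0 0 1,
        S1 = mx3 a1 a2 0  a4 a5 0  0 0 1 &
        S2 = mx3 b1 b2 0  b4 b5 0  0 0 1].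

Definition eps3 (R S1 S2 : 'M[C]_3) : Prop :=
  exists r6 a4 a5 b4 b5 : C,
    [/\ r6 != 0, a5 != 0 & b5 != 0] /\
     [/\         R = mx3 1 0 0  r6^-1 (-1) r6  0 0 1,
        S1 = mx3 1 0 0  a4 a5 (r6 * (1 - r6 * a4 - a5))  0 0 1 &
        S2 = mx3 1 0 0  b4 b5 (r6 * (1 - r6 * b4 - b5))  0 0 1].

Definition eps4 (R S1 S2 : 'M[C]_3) : Prop :=
  exists r2 a5 a8 b5 b8 : C,
    [/\ r2 != 0, a5 != 0 & b5 != 0] /\
     [/\         R = mx3 1 r2 0  0 (-1) 0  0 r2^-1 1,
        S1 = mx3 1 (r2 * (1 - a5 - r2 * a8)) 0  0 a5 0  0 a8 1 &
        S2 = mx3 1 (r2 * (1 - b5 - r2 * b8)) 0  0 b5 0  0 b8 1].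

End Defs.

(* Main.v *)
Require Import Defs.
From HB Require Import structures.
From mathcomp Require Import all_boot all_order all_algebra.
From mathcomp Require Import reals complex.
From mathcomp Require Import ring zify.
Import Order.TTheory GRing.Theory Num.Theory.
Local Open Scope ring_scope.

Section Gen.
Variable C : fieldType.

Definition ent (M : 'M[C]_3) (k l : nat) := M (inord k) (inord l).
Definition nf (X : 'M[C]_5) (a b : nat) := X (inord a) (inord b).
Arguments nf : simpl never.

Lemma nf_mul X Y a b : nf (X *m Y) a b =
  nf X a 0 * nf Y 0 b + nf X a 1 * nf Y 1 b + nf X a 2 * nf Y 2 b
  + nf X a 3 * nf Y 3 b + nf X a 4 * nf Y 4 b.
Proof.
rewrite /nf mxE !big_ord_recl big_ord0 addr0 !addrA.
by congr (_ + _ + _ + _ + _); congr (X _ _ * Y _ _); apply/val_inj; rewrite /= inordK.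
Qed.

Lemma nf_blk i M a b : (a < 5)%N -> (b < 5)%N -> nf (blk 4 i M) a b =
  if ((i.-1 <= a < i.+2) && (i.-1 <= b < i.+2))%N
    then ent M (Nat.sub a i.-1) (Nat.sub b i.-1) else (a == b)%:R.
Proof.
move=> ha hb; rewrite /nf /blk mxE (inordK ha) (inordK hb) /ent; case: ifP => // _.
congr (_ %:R); congr (nat_of_bool _); apply/idP/idP => /eqP h; apply/eqP;
  [by move: (congr1 val h); rewrite /= (inordK ha) (inordK hb) | by rewrite h].
Qed.

Lemma entE (M : 'M[C]_3) (x y : 'I_3) : M x y = ent M x y.
Proof. by rewrite /ent !inord_val. Qed.

Lemma ent_mx3 a b c d e f g h k i j : (i < 3)%N -> (j < 3)%N ->
  ent (mx3 a b c d e f g h k) i j =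
  nth 0 (nth [::] [:: [:: a; b; c]; [:: d; e; f]; [:: g; h; k]] i) j.
Proof. by move=> hi hj; rewrite /ent /mx3 mxE (inordK hi) (inordK hj). Qed.

Lemma mx3_ent M a b c d e f g h k :
  ent M 0 0 = a -> ent M 0 1 = b -> ent M 0 2 = c ->
  ent M 1 0 = d -> ent M 1 1 = e -> ent M 1 2 = f ->
  ent M 2 0 = g -> ent M 2 1 = h -> ent M 2 2 = k ->
  M = mx3 a b c d e f g h k.
Proof.
move=> *; apply/matrixP => i j; rewrite (entE M) (entE (mx3 _ _ _ _ _ _ _ _ _)) ent_mx3 //.
by case: i j => [[|[|[|i]]] Hi] [[|[|[|j]]] Hj].
Qed.

Lemma det3 (M : 'M[C]_3) : \det M = ent M 0 0 * (ent M 1 1 * ent M 2 2 - ent M 1 2 * ent M 2 1)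
  - ent M 0 1 * (ent M 1 0 * ent M 2 2 - ent M 1 2 * ent M 2 0)
  + ent M 0 2 * (ent M 1 0 * ent M 2 1 - ent M 1 1 * ent M 2 0).
Proof.
rewrite (expand_det_row _ 0) !big_ord_recl big_ord0 /cofactor.
rewrite !(expand_det_row _ 0) !big_ord_recl big_ord0 /cofactor !det_mx11 !mxE !big_ord0 !entE /=.
have b0 k : bump 0 k = k.+1 by [].
have b1 k : bump k.+1 0 = 0 by [].
rewrite !(b0, b1) !add0n /=. ring.
Qed.

Opaque ent.

Lemma nf_one a b : (a < 5)%N -> (b < 5)%N -> nf 1%:M a b = (a == b)%:R.
Proof.
move=> ha hb; rewrite /nf mxE; congr (_ %:R); congr (nat_of_bool _); apply/idP/idP => /eqP h; apply/eqP;
  [by move: (congr1 val h); rewrite /= (inordK ha) (inordK hb) | by rewrite h].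
Qed.

Definition ext5 m (X : 'M[C]_5) : 'M[C]_(5 + m) := block_mx X 0 0 1%:M.

Lemma ext5M m X Y : ext5 m X *m ext5 m Y = ext5 m (X *m Y).
Proof. by rewrite /ext5 mulmx_block !mulmx0 !mul0mx !addr0 !add0r mulmx1. Qed.

Lemma ext5_inj m X Y : ext5 m X = ext5 m Y -> X = Y.
Proof. by move/eq_block_mx => []. Qed.

Lemma ext5_1 m : ext5 m 1%:M = 1%:M.
Proof. by rewrite /ext5 scalar_mx_block. Qed.

Lemma ordE k (x y : 'I_k) : (x == y) = (nat_of_ord x == nat_of_ord y).
Proof. by []. Qed.

Lemma blk_ext m i M : (1 <= i <= 3)%N -> blk m.+4 i M = ext5 m (blk 4 i M).
Proof.
move=> hi; apply/matrixP => a b; rewrite /ext5.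
have h5 : forall k, (5 + k < i.+2)%N = false by move=> k; apply/negbTE; rewrite -leqNgt; lia.
rewrite -(@splitK 5 m a) -(@splitK 5 m b); case: (@split 5 m a) => a'; case: (@split 5 m b) => b' /=.
- by rewrite (@block_mxEul _ 5 m 5 m) /blk !mxE /= !ordE.
- rewrite (@block_mxEur _ 5 m 5 m) /blk !mxE /= h5 !andbF ordE /=.
  by have /negbTE -> : (nat_of_ord a' != 5 + b')%N by have := ltn_ord a'; lia.
- rewrite (@block_mxEdl _ 5 m 5 m) /blk !mxE /= h5 !andbF ordE /=.
  by have /negbTE -> : (5 + a' != nat_of_ord b')%N by have := ltn_ord b'; lia.
- by rewrite (@block_mxEdr _ 5 m 5 m) /blk !mxE /= h5 !andbF !ordE /= eqn_add2l.
Qed.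

Lemma eq_lin {L Rr P Q : C} : L = Rr -> L - Rr = P - Q -> P = Q.
Proof. by move=> -> /eqP; rewrite subrr eq_sym subr_eq0 => /eqP. Qed.

Lemma mul0 {x y : C} : x * y = 0 -> x != 0 -> y = 0.
Proof. by move=> /eqP h hx; move: h; rewrite mulf_eq0 (negbTE hx) /= => /eqP. Qed.
Lemma mul0' {x y : C} : x * y = 0 -> y != 0 -> x = 0.
Proof. by move=> /eqP h hy; move: h; rewrite mulf_eq0 (negbTE hy) orbF => /eqP. Qed.
Lemma sq0 {x : C} : x * x = 0 -> x = 0.
Proof. by move/eqP; rewrite mulf_eq0 orbb => /eqP. Qed.
Lemma neq0_l {x y : C} : x * y = 1 -> x != 0.
Proof. by move=> h; apply/eqP => hx; move: h; rewrite hx mul0r => /eqP; rewrite eq_sym oner_eq0. Qed.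
Lemma neq0_r {x y : C} : x * y = 1 -> y != 0.
Proof. by move=> h; apply/eqP => hx; move: h; rewrite hx mulr0 => /eqP; rewrite eq_sym oner_eq0. Qed.
Lemma inv_r {x y : C} : x * y = 1 -> y = x^-1.
Proof. by move=> h; have hx := neq0_l h; rewrite -[y]mul1r -(mulVf hx) -mulrA h mulr1. Qed.
Lemma inv_l {x y : C} : x * y = 1 -> x = y^-1.
Proof. by rewrite mulrC; apply: inv_r. Qed.

Ltac ext H a b := let h := fresh "h" in
  have h := congr1 (fun Z => nf Z a b) H; rewrite ?nf_mul ?nf_blk ?nf_one // /= ?ent_mx3 // /= in h.
Ltac lin h := first [apply: (eq_lin h); ring | apply: (eq_lin (esym h)); ring].

Lemma farE02 {M N : 'M[C]_3} : blk 4 1 M *m blk 4 3 N = blk 4 3 N *m blk 4 1 M ->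
  (- ent M 0 2 + ent M 0 2 * ent N 0 0) = 0.
Proof. by move=> H; ext H 0%N 2%N; lin h. Qed.

Lemma farE03 {M N : 'M[C]_3} : blk 4 1 M *m blk 4 3 N = blk 4 3 N *m blk 4 1 M ->
  (ent M 0 2 * ent N 0 1) = 0.
Proof. by move=> H; ext H 0%N 3%N; lin h. Qed.

Lemma farE04 {M N : 'M[C]_3} : blk 4 1 M *m blk 4 3 N = blk 4 3 N *m blk 4 1 M ->
  (ent M 0 2 * ent N 0 2) = 0.
Proof. by move=> H; ext H 0%N 4%N; lin h. Qed.

Lemma farE12 {M N : 'M[C]_3} : blk 4 1 M *m blk 4 3 N = blk 4 3 N *m blk 4 1 M ->
  (- ent M 1 2 + ent M 1 2 * ent N 0 0) = 0.
Proof. by move=> H; ext H 1%N 2%N; lin h. Qed.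

Lemma farE13 {M N : 'M[C]_3} : blk 4 1 M *m blk 4 3 N = blk 4 3 N *m blk 4 1 M ->
  (ent M 1 2 * ent N 0 1) = 0.
Proof. by move=> H; ext H 1%N 3%N; lin h. Qed.

Lemma farE14 {M N : 'M[C]_3} : blk 4 1 M *m blk 4 3 N = blk 4 3 N *m blk 4 1 M ->
  (ent M 1 2 * ent N 0 2) = 0.
Proof. by move=> H; ext H 1%N 4%N; lin h. Qed.

Lemma farE20 {M N : 'M[C]_3} : blk 4 1 M *m blk 4 3 N = blk 4 3 N *m blk 4 1 M ->
  (ent M 2 0 - ent M 2 0 * ent N 0 0) = 0.
Proof. by move=> H; ext H 2%N 0%N; lin h. Qed.

Lemma farE21 {M N : 'M[C]_3} : blk 4 1 M *m blk 4 3 N = blk 4 3 N *m blk 4 1 M ->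
  (ent M 2 1 - ent M 2 1 * ent N 0 0) = 0.
Proof. by move=> H; ext H 2%N 1%N; lin h. Qed.

Lemma farE23 {M N : 'M[C]_3} : blk 4 1 M *m blk 4 3 N = blk 4 3 N *m blk 4 1 M ->
  (ent M 2 2 * ent N 0 1 - ent N 0 1) = 0.
Proof. by move=> H; ext H 2%N 3%N; lin h. Qed.

Lemma farE24 {M N : 'M[C]_3} : blk 4 1 M *m blk 4 3 N = blk 4 3 N *m blk 4 1 M ->
  (ent M 2 2 * ent N 0 2 - ent N 0 2) = 0.
Proof. by move=> H; ext H 2%N 4%N; lin h. Qed.

Lemma farE30 {M N : 'M[C]_3} : blk 4 1 M *m blk 4 3 N = blk 4 3 N *m blk 4 1 M ->
  (- ent M 2 0 * ent N 1 0) = 0.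
Proof. by move=> H; ext H 3%N 0%N; lin h. Qed.

Lemma farE31 {M N : 'M[C]_3} : blk 4 1 M *m blk 4 3 N = blk 4 3 N *m blk 4 1 M ->
  (- ent M 2 1 * ent N 1 0) = 0.
Proof. by move=> H; ext H 3%N 1%N; lin h. Qed.

Lemma farE32 {M N : 'M[C]_3} : blk 4 1 M *m blk 4 3 N = blk 4 3 N *m blk 4 1 M ->
  (- ent M 2 2 * ent N 1 0 + ent N 1 0) = 0.
Proof. by move=> H; ext H 3%N 2%N; lin h. Qed.

Lemma farE40 {M N : 'M[C]_3} : blk 4 1 M *m blk 4 3 N = blk 4 3 N *m blk 4 1 M ->
  (- ent M 2 0 * ent N 2 0) = 0.
Proof. by move=> H; ext H 4%N 0%N; lin h. Qed.

Lemma farE41 {M N : 'M[C]_3} : blk 4 1 M *m blk 4 3 N = blk 4 3 N *m blk 4 1 M ->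
  (- ent M 2 1 * ent N 2 0) = 0.
Proof. by move=> H; ext H 4%N 1%N; lin h. Qed.

Lemma farE42 {M N : 'M[C]_3} : blk 4 1 M *m blk 4 3 N = blk 4 3 N *m blk 4 1 M ->
  (- ent M 2 2 * ent N 2 0 + ent N 2 0) = 0.
Proof. by move=> H; ext H 4%N 2%N; lin h. Qed.

Lemma sqE00 {A : 'M[C]_3} : blk 4 1 A *m blk 4 1 A = 1%:M ->
  (- 1 + ent A 0 0 ^+ 2 + ent A 0 1 * ent A 1 0 + ent A 0 2 * ent A 2 0) = 0.
Proof. by move=> H; ext H 0%N 0%N; lin h. Qed.

Lemma sqE01 {A : 'M[C]_3} : blk 4 1 A *m blk 4 1 A = 1%:M ->
  (ent A 0 0 * ent A 0 1 + ent A 0 1 * ent A 1 1 + ent A 0 2 * ent A 2 1) = 0.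
Proof. by move=> H; ext H 0%N 1%N; lin h. Qed.

Lemma sqE02 {A : 'M[C]_3} : blk 4 1 A *m blk 4 1 A = 1%:M ->
  (ent A 0 0 * ent A 0 2 + ent A 0 1 * ent A 1 2 + ent A 0 2 * ent A 2 2) = 0.
Proof. by move=> H; ext H 0%N 2%N; lin h. Qed.

Lemma sqE10 {A : 'M[C]_3} : blk 4 1 A *m blk 4 1 A = 1%:M ->
  (ent A 0 0 * ent A 1 0 + ent A 1 0 * ent A 1 1 + ent A 1 2 * ent A 2 0) = 0.
Proof. by move=> H; ext H 1%N 0%N; lin h. Qed.

Lemma sqE11 {A : 'M[C]_3} : blk 4 1 A *m blk 4 1 A = 1%:M ->
  (- 1 + ent A 0 1 * ent A 1 0 + ent A 1 1 ^+ 2 + ent A 1 2 * ent A 2 1) = 0.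
Proof. by move=> H; ext H 1%N 1%N; lin h. Qed.

Lemma sqE12 {A : 'M[C]_3} : blk 4 1 A *m blk 4 1 A = 1%:M ->
  (ent A 0 2 * ent A 1 0 + ent A 1 1 * ent A 1 2 + ent A 1 2 * ent A 2 2) = 0.
Proof. by move=> H; ext H 1%N 2%N; lin h. Qed.

Lemma sqE20 {A : 'M[C]_3} : blk 4 1 A *m blk 4 1 A = 1%:M ->
  (ent A 0 0 * ent A 2 0 + ent A 1 0 * ent A 2 1 + ent A 2 0 * ent A 2 2) = 0.
Proof. by move=> H; ext H 2%N 0%N; lin h. Qed.

Lemma sqE21 {A : 'M[C]_3} : blk 4 1 A *m blk 4 1 A = 1%:M ->
  (ent A 0 1 * ent A 2 0 + ent A 1 1 * ent A 2 1 + ent A 2 1 * ent A 2 2) = 0.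
Proof. by move=> H; ext H 2%N 1%N; lin h. Qed.

Lemma sqE22 {A : 'M[C]_3} : blk 4 1 A *m blk 4 1 A = 1%:M ->
  (- 1 + ent A 0 2 * ent A 2 0 + ent A 1 2 * ent A 2 1 + ent A 2 2 ^+ 2) = 0.
Proof. by move=> H; ext H 2%N 2%N; lin h. Qed.

Lemma brE00 {A : 'M[C]_3} : blk 4 1 A *m blk 4 2 A *m blk 4 1 A = blk 4 2 A *m blk 4 1 A *m blk 4 2 A ->
  (- ent A 0 0 + ent A 0 0 * ent A 0 1 * ent A 1 0 + ent A 0 0 ^+ 2 + ent A 0 1 ^+ 2 * ent A 2 0 + ent A 0 2 * ent A 1 0 ^+ 2 + ent A 0 2 * ent A 1 1 * ent A 2 0) = 0.
Proof. by move=> H; ext H 0%N 0%N; lin h. Qed.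

Lemma brE01 {A : 'M[C]_3} : blk 4 1 A *m blk 4 2 A *m blk 4 1 A = blk 4 2 A *m blk 4 1 A *m blk 4 2 A ->
  (ent A 0 0 * ent A 0 1 * ent A 1 1 + ent A 0 1 ^+ 2 * ent A 2 1 - ent A 0 2 * ent A 1 0 + ent A 0 2 * ent A 1 0 * ent A 1 1 + ent A 0 2 * ent A 1 1 * ent A 2 1) = 0.
Proof. by move=> H; ext H 0%N 1%N; lin h. Qed.

Lemma brE10 {A : 'M[C]_3} : blk 4 1 A *m blk 4 2 A *m blk 4 1 A = blk 4 2 A *m blk 4 1 A *m blk 4 2 A ->
  (ent A 0 0 * ent A 1 0 * ent A 1 1 + ent A 0 1 * ent A 1 1 * ent A 2 0 - ent A 0 1 * ent A 2 0 + ent A 1 0 ^+ 2 * ent A 1 2 + ent A 1 1 * ent A 1 2 * ent A 2 0) = 0.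
Proof. by move=> H; ext H 1%N 0%N; lin h. Qed.

Lemma brE11 {A : 'M[C]_3} : blk 4 1 A *m blk 4 2 A *m blk 4 1 A = blk 4 2 A *m blk 4 1 A *m blk 4 2 A ->
  (- ent A 0 0 * ent A 0 1 * ent A 2 1 - ent A 0 0 * ent A 1 0 * ent A 1 2 + ent A 0 0 * ent A 1 1 ^+ 2 - ent A 0 0 ^+ 2 * ent A 1 1 + ent A 0 1 * ent A 1 0 - ent A 0 1 * ent A 1 0 * ent A 2 2 + ent A 0 1 * ent A 1 1 * ent A 2 1 - ent A 0 2 * ent A 2 0 + ent A 1 0 * ent A 1 1 * ent A 1 2 + ent A 1 1 * ent A 1 2 * ent A 2 1) = 0.
Proof. by move=> H; ext H 1%N 1%N; lin h. Qed.

Lemma brE12 {A : 'M[C]_3} : blk 4 1 A *m blk 4 2 A *m blk 4 1 A = blk 4 2 A *m blk 4 1 A *m blk 4 2 A ->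
  (- ent A 0 0 * ent A 0 1 * ent A 1 1 - ent A 0 1 ^+ 2 * ent A 2 1 + ent A 0 2 * ent A 1 0 - ent A 0 2 * ent A 2 1 + ent A 1 0 * ent A 1 2 ^+ 2 + ent A 1 1 * ent A 1 2 * ent A 2 2) = 0.
Proof. by move=> H; ext H 1%N 2%N; lin h. Qed.

Lemma brE21 {A : 'M[C]_3} : blk 4 1 A *m blk 4 2 A *m blk 4 1 A = blk 4 2 A *m blk 4 1 A *m blk 4 2 A ->
  (- ent A 0 0 * ent A 1 0 * ent A 1 1 + ent A 0 1 * ent A 2 0 + ent A 0 1 * ent A 2 1 ^+ 2 - ent A 1 0 ^+ 2 * ent A 1 2 + ent A 1 1 * ent A 2 1 * ent A 2 2 - ent A 1 2 * ent A 2 0) = 0.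
Proof. by move=> H; ext H 2%N 1%N; lin h. Qed.

Lemma brE33 {A : 'M[C]_3} : blk 4 1 A *m blk 4 2 A *m blk 4 1 A = blk 4 2 A *m blk 4 1 A *m blk 4 2 A ->
  (- ent A 0 2 * ent A 1 1 * ent A 2 0 - ent A 0 2 * ent A 2 1 ^+ 2 - ent A 1 2 * ent A 2 1 * ent A 2 2 - ent A 1 2 ^+ 2 * ent A 2 0 + ent A 2 2 - ent A 2 2 ^+ 2) = 0.
Proof. by move=> H; ext H 3%N 3%N; lin h. Qed.
Lemma R_alg {r00 r01 r02 r10 r11 r12 r20 r21 r22 : C}
  (F04 : (r02 * r02) = 0)
  (F40 : (- r20 * r20) = 0)
  (F13 : (r12 * r01) = 0)
  (F31 : (- r21 * r10) = 0)
  (F12 : (- r12 + r12 * r00) = 0)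
  (F21 : (r21 - r21 * r00) = 0)
  (F23 : (r22 * r01 - r01) = 0)
  (F32 : (- r22 * r10 + r10) = 0)
  (Q00 : (- 1 + r00 ^+ 2 + r01 * r10 + r02 * r20) = 0)
  (Q01 : (r00 * r01 + r01 * r11 + r02 * r21) = 0)
  (Q02 : (r00 * r02 + r01 * r12 + r02 * r22) = 0)
  (Q10 : (r00 * r10 + r10 * r11 + r12 * r20) = 0)
  (Q11 : (- 1 + r01 * r10 + r11 ^+ 2 + r12 * r21) = 0)
  (Q12 : (r02 * r10 + r11 * r12 + r12 * r22) = 0)
  (Q20 : (r00 * r20 + r10 * r21 + r20 * r22) = 0)
  (Q21 : (r01 * r20 + r11 * r21 + r21 * r22) = 0)
  (Q22 : (- 1 + r02 * r20 + r12 * r21 + r22 ^+ 2) = 0)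
  (B00 : (- r00 + r00 * r01 * r10 + r00 ^+ 2 + r01 ^+ 2 * r20 + r02 * r10 ^+ 2 + r02 * r11 * r20) = 0)
  (B01 : (r00 * r01 * r11 + r01 ^+ 2 * r21 - r02 * r10 + r02 * r10 * r11 + r02 * r11 * r21) = 0)
  (B10 : (r00 * r10 * r11 + r01 * r11 * r20 - r01 * r20 + r10 ^+ 2 * r12 + r11 * r12 * r20) = 0)
  (B11 : (- r00 * r01 * r21 - r00 * r10 * r12 + r00 * r11 ^+ 2 - r00 ^+ 2 * r11 + r01 * r10 - r01 * r10 * r22 + r01 * r11 * r21 - r02 * r20 + r10 * r11 * r12 + r11 * r12 * r21) = 0)
  (B12 : (- r00 * r01 * r11 - r01 ^+ 2 * r21 + r02 * r10 - r02 * r21 + r10 * r12 ^+ 2 + r11 * r12 * r22) = 0)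
  (B21 : (- r00 * r10 * r11 + r01 * r20 + r01 * r21 ^+ 2 - r10 ^+ 2 * r12 + r11 * r21 * r22 - r12 * r20) = 0)
  (B33 : (- r02 * r11 * r20 - r02 * r21 ^+ 2 - r12 * r21 * r22 - r12 ^+ 2 * r20 + r22 - r22 ^+ 2) = 0) :
  r02 = 0 /\ r20 = 0 /\
  ([/\ r00 = 1, r01 = 0, r10 = 0, r11 = 1 & [/\ r12 = 0, r21 = 0 & r22 = 1]] \/
  [\/ [/\ r00 = 1, r01 = 0, r10 = 0, r11 = 0 & [/\ r22 = 0 & r12 * r21 = 1]],
      [/\ r00 = 0, r11 = 0, r01 * r10 = 1, r12 = 0 & [/\ r21 = 0 & r22 = 1]],
      [/\ r00 = 1, r01 = 0, r11 = -1, r10 * r12 = 1 & [/\ r21 = 0 & r22 = 1]] |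
      [/\ r00 = 1, r10 = 0, r11 = -1, r01 * r21 = 1 & [/\ r12 = 0 & r22 = 1]]]).
Proof.
have h02 : r02 = 0 by apply: sq0; lin F04.
have h20 : r20 = 0 by apply: sq0; lin F40.
subst r02 r20; split=> //; split=> //.
case: (eqVneq r01 0) => [h01|n01]; case: (eqVneq r10 0) => [h10|n10].
- subst r01 r10.
  have b00 : r00 ^+ 2 = r00 by lin B00.
  have q00 : r00 ^+ 2 = 1 by lin Q00.
  have h00 : r00 = 1 by rewrite -b00 q00.
  subst r00.
  case: (boolP ((r12 == 0) && (r21 == 0))) => [/andP[/eqP h12 /eqP h21]|hn].
    subst r12 r21.
    have b33 : r22 = r22 ^+ 2 by lin B33.
    have q22 : r22 ^+ 2 = 1 by lin Q22.
    have b11 : r11 ^+ 2 = r11 by lin B11.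
    have q11 : r11 ^+ 2 = 1 by lin Q11.
    by left; split=> //; [rewrite -b11 q11 | split=> //; rewrite b33 q22].
  have [s b] : r11 + r22 = 0 /\ r11 * r22 = 0.
    case: (eqVneq r12 0) => [h12|n12].
      have n21 : r21 != 0 by move: hn; rewrite h12 eqxx.
      by split; apply: (mul0 _ n21); [lin Q21 | lin B21].
    by split; apply: (mul0 _ n12); [lin Q12 | lin B12].
  have h11 : r11 = - r22 by lin s.
  subst r11.
  have h22 : r22 = 0 by apply: sq0; lin b.
  subst r22.
  right; constructor 1; split=> //; first by rewrite oppr0.
  by split=> //; lin Q22.
- subst r01.
  have h21 : r21 = 0 by apply: (mul0' _ n10); lin F31.
  have h22 : r22 = 1.
    have e : (r22 - 1) * r10 = 0 by lin F32.
    by have := mul0' e n10; move/eqP; rewrite subr_eq0 => /eqP.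
  subst r21 r22.
  have h11 : r11 = - r00.
    have e : r10 * (r00 + r11) = 0 by lin Q10.
    by have := mul0 e n10 => e'; lin e'.
  subst r11.
  have b00 : r00 ^+ 2 = r00 by lin B00.
  have q00 : r00 ^+ 2 = 1 by lin Q00.
  have h00 : r00 = 1 by rewrite -b00 q00.
  subst r00.
  have e : r10 * (r10 * r12 - 1) = 0 by lin B10.
  have := mul0 e n10 => e'.
  by right; constructor 3; split=> //; first [lin e' | split].
- subst r10.
  have h12 : r12 = 0 by apply: (mul0' _ n01); lin F13.
  have h22 : r22 = 1.
    have e : (r22 - 1) * r01 = 0 by lin F23.
    by have := mul0' e n01; move/eqP; rewrite subr_eq0 => /eqP.
  subst r12 r22.
  have h11 : r11 = - r00.
    have e : r01 * (r00 + r11) = 0 by lin Q01.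
    by have := mul0 e n01 => e'; lin e'.
  subst r11.
  have b00 : r00 ^+ 2 = r00 by lin B00.
  have q00 : r00 ^+ 2 = 1 by lin Q00.
  have h00 : r00 = 1 by rewrite -b00 q00.
  subst r00.
  have e : r01 * (r01 * r21 - 1) = 0 by lin B01.
  have := mul0 e n01 => e'.
  by right; constructor 4; split=> //; first [lin e' | split].
- have h12 : r12 = 0 by apply: (mul0' _ n01); lin F13.
  have h21 : r21 = 0 by apply: (mul0' _ n10); lin F31.
  have h22 : r22 = 1.
    have e : (r22 - 1) * r01 = 0 by lin F23.
    by have := mul0' e n01; move/eqP; rewrite subr_eq0 => /eqP.
  subst r12 r21 r22.
  have h11 : r11 = - r00.
    have e : r01 * (r00 + r11) = 0 by lin Q01.
    by have := mul0 e n01 => e'; lin e'.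
  subst r11.
  have h00 : r00 = 0.
    have e : r01 * (r00 * r00) = 0 by lin B01.
    exact: sq0 (mul0 e n01).
  subst r00.
  by right; constructor 2; split=> //; first [rewrite oppr0 | lin Q00 | split].
Qed.

Lemma sub0 {x y : C} : x - y = 0 -> x = y.
Proof. by move/eqP; rewrite subr_eq0 => /eqP. Qed.

Lemma R_class (A : 'M[C]_3) :
  blk 4 1 A *m blk 4 3 A = blk 4 3 A *m blk 4 1 A ->
  blk 4 1 A *m blk 4 1 A = 1%:M ->
  blk 4 1 A *m blk 4 2 A *m blk 4 1 A = blk 4 2 A *m blk 4 1 A *m blk 4 2 A ->
  A = mx3 1 0 0 0 1 0 0 0 1 \/
  [\/ exists2 b, b != 0 & A = mx3 1 0 0 0 0 b 0 b^-1 0,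
      exists2 b, b != 0 & A = mx3 0 b 0 b^-1 0 0 0 0 1,
      exists2 b, b != 0 & A = mx3 1 0 0 b^-1 (-1) b 0 0 1 |
      exists2 b, b != 0 & A = mx3 1 b 0 0 (-1) 0 0 b^-1 1].
Proof.
move=> Hf Hs Hb.
have [h02 [h20 [[e00 e01 e10 e11 [e12 e21 e22]] | [[e00 e01 e10 e11 [e22 p]] | [e00 e11 p e12 [e21 e22]] | [e00 e01 e11 p [e21 e22]] | [e00 e10 e11 p [e12 e22]]]]]] :=
  R_alg (farE04 Hf) (farE40 Hf) (farE13 Hf) (farE31 Hf) (farE12 Hf) (farE21 Hf) (farE23 Hf) (farE32 Hf)
    (sqE00 Hs) (sqE01 Hs) (sqE02 Hs) (sqE10 Hs) (sqE11 Hs) (sqE12 Hs) (sqE20 Hs) (sqE21 Hs) (sqE22 Hs)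
    (brE00 Hb) (brE01 Hb) (brE10 Hb) (brE11 Hb) (brE12 Hb) (brE21 Hb) (brE33 Hb).
- by left; apply: mx3_ent.
- right; constructor 1; exists (ent A 1 2); first exact: neq0_l p.
  by apply: mx3_ent => //; exact: inv_r p.
- right; constructor 2; exists (ent A 0 1); first exact: neq0_l p.
  by apply: mx3_ent => //; exact: inv_r p.
- right; constructor 3; exists (ent A 1 2); first exact: neq0_r p.
  by apply: mx3_ent => //; exact: inv_l p.
- right; constructor 4; exists (ent A 0 1); first exact: neq0_l p.
  by apply: mx3_ent => //; exact: inv_r p.
Qed.

Lemma S_id (S : 'M[C]_3) :
  let A := mx3 1 0 0 0 1 0 0 0 1 in
  blk 4 1 A *m blk 4 2 A *m blk 4 1 S = blk 4 2 S *m blk 4 1 A *m blk 4 2 A ->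
  S = mx3 1 0 0 0 1 0 0 0 1.
Proof.
move=> A Hm; rewrite /A in Hm.
have s00 : ent S 0 0 = 1 by ext Hm 0%N 0%N; lin h.
have s01 : ent S 0 1 = 0 by ext Hm 0%N 1%N; lin h.
have s02 : ent S 0 2 = 0 by ext Hm 0%N 2%N; lin h.
have s10 : ent S 1 0 = 0 by ext Hm 1%N 0%N; lin h.
have s11 : ent S 1 1 = ent S 0 0 by ext Hm 1%N 1%N; lin h.
have s12 : ent S 1 2 = ent S 0 1 by ext Hm 1%N 2%N; lin h.
have s20 : ent S 2 0 = 0 by ext Hm 2%N 0%N; lin h.
have s21 : ent S 2 1 = ent S 1 0 by ext Hm 2%N 1%N; lin h.
have s22 : ent S 2 2 = ent S 1 1 by ext Hm 2%N 2%N; lin h.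
by apply: mx3_ent; rewrite ?s11 ?s12 ?s21 ?s22 ?s11.
Qed.

Lemma S_fam1 (b : C) (S : 'M[C]_3) : b != 0 ->
  let A := mx3 1 0 0 0 0 b 0 b^-1 0 in
  blk 4 1 S *m blk 4 3 A = blk 4 3 A *m blk 4 1 S ->
  blk 4 1 A *m blk 4 3 S = blk 4 3 S *m blk 4 1 A ->
  blk 4 1 A *m blk 4 2 A *m blk 4 1 S = blk 4 2 S *m blk 4 1 A *m blk 4 2 A ->
  S \in unitmx ->
  exists a5 a6 a8 a9, a5 * a9 - a6 * a8 != 0 /\ S = mx3 1 0 0 0 a5 a6 0 a8 a9.
Proof.
move=> hb A H1 H2 Hm uS; rewrite /A in H1 H2 Hm.
have hbi : b^-1 != 0 by rewrite invr_eq0.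
have s00 : ent S 0 0 = 1.
  have F := farE12 H2; rewrite !ent_mx3 //= in F.
  by apply: sub0; apply: (mul0 _ hb); lin F.
have s01 : ent S 0 1 = 0.
  by have F := farE13 H2; rewrite !ent_mx3 //= in F; apply: (mul0 _ hb); lin F.
have s02 : ent S 0 2 = 0.
  by have F := farE14 H2; rewrite !ent_mx3 //= in F; apply: (mul0 _ hb); lin F.
have s10 : ent S 1 0 = 0.
  by have F := farE31 H2; rewrite !ent_mx3 //= in F; apply: (mul0 _ hbi); lin F.
have s20 : ent S 2 0 = 0.
  by have F := farE41 H2; rewrite !ent_mx3 //= in F; apply: (mul0 _ hbi); lin F.
have dd : \det S = ent S 1 1 * ent S 2 2 - ent S 1 2 * ent S 2 1.
  by rewrite det3 s00 s01 s02 s10 s20; ring.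
rewrite unitmxE unitfE dd in uS.
exists (ent S 1 1), (ent S 1 2), (ent S 2 1), (ent S 2 2); split=> //.
exact: mx3_ent.
Qed.

Lemma S_fam2 (b : C) (S : 'M[C]_3) : b != 0 ->
  let A := mx3 0 b 0 b^-1 0 0 0 0 1 in
  blk 4 1 S *m blk 4 3 A = blk 4 3 A *m blk 4 1 S ->
  blk 4 1 A *m blk 4 3 S = blk 4 3 S *m blk 4 1 A ->
  blk 4 1 A *m blk 4 2 A *m blk 4 1 S = blk 4 2 S *m blk 4 1 A *m blk 4 2 A ->
  S \in unitmx ->
  exists a1 a2 a4 a5, a1 * a5 - a2 * a4 != 0 /\ S = mx3 a1 a2 0 a4 a5 0 0 0 1.
Proof.
move=> hb A H1 H2 Hm uS; rewrite /A in H1 H2 Hm.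
have hbi : b^-1 != 0 by rewrite invr_eq0.
have s22 : ent S 2 2 = 1.
  have F := farE32 H1; rewrite !ent_mx3 //= in F.
  by apply: sub0; apply: (mul0' _ hbi); lin F.
have s20 : ent S 2 0 = 0.
  by have F := farE30 H1; rewrite !ent_mx3 //= in F; apply: (mul0' _ hbi); lin F.
have s21 : ent S 2 1 = 0.
  by have F := farE31 H1; rewrite !ent_mx3 //= in F; apply: (mul0' _ hbi); lin F.
have s02 : ent S 0 2 = 0.
  by have F := farE03 H1; rewrite !ent_mx3 //= in F; apply: (mul0' _ hb); lin F.
have s12 : ent S 1 2 = 0.
  by have F := farE13 H1; rewrite !ent_mx3 //= in F; apply: (mul0' _ hb); lin F.
have dd : \det S = ent S 0 0 * ent S 1 1 - ent S 0 1 * ent S 1 0.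
  by rewrite det3 s22 s20 s21 s02 s12; ring.
rewrite unitmxE unitfE dd in uS.
exists (ent S 0 0), (ent S 0 1), (ent S 1 0), (ent S 1 1); split=> //.
exact: mx3_ent.
Qed.

Lemma S_fam3 (b : C) (S : 'M[C]_3) : b != 0 ->
  let A := mx3 1 0 0 b^-1 (-1) b 0 0 1 in
  blk 4 1 S *m blk 4 3 A = blk 4 3 A *m blk 4 1 S ->
  blk 4 1 A *m blk 4 3 S = blk 4 3 S *m blk 4 1 A ->
  blk 4 1 A *m blk 4 2 A *m blk 4 1 S = blk 4 2 S *m blk 4 1 A *m blk 4 2 A ->
  S \in unitmx ->
  exists a4 a5, a5 != 0 /\ S = mx3 1 0 0 a4 a5 (b * (1 - b * a4 - a5)) 0 0 1.
Proof.
move=> hb A H1 H2 Hm uS; rewrite /A in H1 H2 Hm.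
have hbi : b^-1 != 0 by rewrite invr_eq0.
have s22 : ent S 2 2 = 1.
  have F := farE32 H1; rewrite !ent_mx3 //= in F.
  by apply: sub0; apply: (mul0' _ hbi); lin F.
have s20 : ent S 2 0 = 0.
  by have F := farE30 H1; rewrite !ent_mx3 //= in F; apply: (mul0' _ hbi); lin F.
have s21 : ent S 2 1 = 0.
  by have F := farE31 H1; rewrite !ent_mx3 //= in F; apply: (mul0' _ hbi); lin F.
have s00 : ent S 0 0 = 1.
  have F := farE12 H2; rewrite !ent_mx3 //= in F.
  by apply: sub0; apply: (mul0 _ hb); lin F.
have s01 : ent S 0 1 = 0.
  by have F := farE13 H2; rewrite !ent_mx3 //= in F; apply: (mul0 _ hb); lin F.
have s02 : ent S 0 2 = 0.
  by have F := farE14 H2; rewrite !ent_mx3 //= in F; apply: (mul0 _ hb); lin F.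
have s12 : ent S 1 2 = b * (1 - b * ent S 1 0 - ent S 1 1).
  by ext Hm 2%N 3%N; rewrite ?s22 ?s20 ?s21 ?s00 ?s01 ?s02 in h; lin h.
have dd : \det S = ent S 1 1.
  by rewrite det3 s22 s20 s21 s00 s01 s02; ring.
rewrite unitmxE unitfE dd in uS.
exists (ent S 1 0), (ent S 1 1); split=> //.
exact: mx3_ent.
Qed.

Lemma S_fam4 (b : C) (S : 'M[C]_3) : b != 0 ->
  let A := mx3 1 b 0 0 (-1) 0 0 b^-1 1 in
  blk 4 1 S *m blk 4 3 A = blk 4 3 A *m blk 4 1 S ->
  blk 4 1 A *m blk 4 3 S = blk 4 3 S *m blk 4 1 A ->
  blk 4 1 A *m blk 4 2 A *m blk 4 1 S = blk 4 2 S *m blk 4 1 A *m blk 4 2 A ->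
  S \in unitmx ->
  exists a5 a8, a5 != 0 /\ S = mx3 1 (b * (1 - a5 - b * a8)) 0 0 a5 0 0 a8 1.
Proof.
move=> hb A H1 H2 Hm uS; rewrite /A in H1 H2 Hm.
have hbi : b^-1 != 0 by rewrite invr_eq0.
have s02 : ent S 0 2 = 0.
  by have F := farE03 H1; rewrite !ent_mx3 //= in F; apply: (mul0' _ hb); lin F.
have s12 : ent S 1 2 = 0.
  by have F := farE13 H1; rewrite !ent_mx3 //= in F; apply: (mul0' _ hb); lin F.
have s22 : ent S 2 2 = 1.
  have F := farE23 H1; rewrite !ent_mx3 //= in F.
  by apply: sub0; apply: (mul0' _ hb); lin F.
have s10 : ent S 1 0 = 0.
  by have F := farE31 H2; rewrite !ent_mx3 //= in F; apply: (mul0 _ hbi); lin F.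
have s20 : ent S 2 0 = 0.
  by have F := farE41 H2; rewrite !ent_mx3 //= in F; apply: (mul0 _ hbi); lin F.
have s00 : ent S 0 0 = 1.
  have F := farE21 H2; rewrite !ent_mx3 //= in F.
  by apply: sub0; apply: (mul0 _ hbi); lin F.
have s01 : ent S 0 1 = b * (1 - ent S 1 1 - b * ent S 2 1).
  by ext Hm 0%N 1%N; rewrite ?s02 ?s12 ?s22 ?s10 ?s20 ?s00 in h; lin h.
have dd : \det S = ent S 1 1.
  by rewrite det3 s02 s12 s22 s10 s20 s00; ring.
rewrite unitmxE unitfE dd in uS.
exists (ent S 1 1), (ent S 2 1); split=> //.
exact: mx3_ent.
Qed.

Lemma blk_id n i : blk n i (mx3 (C:=C) 1 0 0 0 1 0 0 0 1) = 1%:M.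
Proof.
apply/matrixP => a b; rewrite /blk !mxE.
case: ifP => [/andP[/andP[ha1 ha2] /andP[hb1 hb2]] | _] //.
have hx : (a - i.-1 < 3)%N by lia.
have hy : (b - i.-1 < 3)%N by lia.
rewrite (inordK hx) (inordK hy).
have -> : (a == b) = (a - i.-1 == b - i.-1)%N.
  by rewrite ordE; apply/eqP/eqP; lia.
by move: (a - i.-1)%N (b - i.-1)%N hx hy => [|[|[|x]]] [|[|[|y]]].
Qed.

End Gen.

Arguments R_class {C A}.
Arguments S_id {C S}.
Arguments S_fam1 {C b S}.
Arguments S_fam2 {C b S}.
Arguments S_fam3 {C b S}.
Arguments S_fam4 {C b S}.

Lemma main_gen (C : fieldType) m (A S1 S2 : 'M[C]_3) :
  homog3local_rep m.+4 A S1 S2 -> ~ trivial_rep m.+4 A S1 S2 ->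
  [\/ eps1 A S1 S2, eps2 A S1 S2, eps3 A S1 S2 | eps4 A S1 S2].
Proof.
case=> uA uS1 uS2 HR HnT.
move: HR; rewrite /is_UV2_rep => -[Hbr [Hfar [Hsq [_ [Hsr Hmix]]]]].
have Hb : blk 4 1 A *m blk 4 2 A *m blk 4 1 A = blk 4 2 A *m blk 4 1 A *m blk 4 2 A.
  have h := Hbr 1%N isT; rewrite !(@blk_ext _ m) // !ext5M in h; exact: ext5_inj h.
have Hf : blk 4 1 A *m blk 4 3 A = blk 4 3 A *m blk 4 1 A.
  have h := Hfar 1%N 3%N isT isT isT; rewrite !(@blk_ext _ m) // !ext5M in h; exact: ext5_inj h.
have Hs : blk 4 1 A *m blk 4 1 A = 1%:M.
  have h := Hsq 1%N isT; rewrite !(@blk_ext _ m) // ext5M in h; apply: ext5_inj; rewrite ext5_1; exact: h.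
have HS : forall t, (1 <= t <= 2)%N ->
  let S := if t == 1%N then S1 else S2 in
  [/\ blk 4 1 S *m blk 4 3 A = blk 4 3 A *m blk 4 1 S,
      blk 4 1 A *m blk 4 3 S = blk 4 3 S *m blk 4 1 A &
      blk 4 1 A *m blk 4 2 A *m blk 4 1 S = blk 4 2 S *m blk 4 1 A *m blk 4 2 A].
  move=> t ht S; split.
  - have h := Hsr 1%N 3%N t isT isT isT ht; rewrite !(@blk_ext _ m) // !ext5M in h; exact: ext5_inj h.
  - have h := Hsr 3%N 1%N t isT isT isT ht; rewrite !(@blk_ext _ m) // !ext5M in h; symmetry; exact: ext5_inj h.
  - have h := Hmix 1%N t isT ht; rewrite !(@blk_ext _ m) // !ext5M in h; exact: ext5_inj h.
have [H11 H12 H13] := HS 1%N isT.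
have [H21 H22 H23] := HS 2%N isT.
rewrite /= in H11 H12 H13 H21 H22 H23.
case: (R_class Hf Hs Hb) => [hA | [[b hb hA] | [b hb hA] | [b hb hA] | [b hb hA]]]; subst A.
- exfalso; apply: HnT => i _.
  by rewrite (S_id H13) (S_id H23) blk_id.
- have [a5 [a6 [a8 [a9 [d1 e1]]]]] := S_fam1 hb H11 H12 H13 uS1.
  have [b5 [b6 [b8 [b9 [d2 e2]]]]] := S_fam1 hb H21 H22 H23 uS2.
  by constructor 1; exists b, a5, a6, a8, a9, b5, b6, b8, b9.
- have [a1 [a2 [a4 [a5 [d1 e1]]]]] := S_fam2 hb H11 H12 H13 uS1.
  have [b1 [b2 [b4 [b5 [d2 e2]]]]] := S_fam2 hb H21 H22 H23 uS2.
  by constructor 2; exists b, a1, a2, a4, a5, b1, b2, b4, b5.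
- have [a4 [a5 [d1 e1]]] := S_fam3 hb H11 H12 H13 uS1.
  have [b4 [b5 [d2 e2]]] := S_fam3 hb H21 H22 H23 uS2.
  by constructor 3; exists b, a4, a5, b4, b5.
- have [a5 [a8 [d1 e1]]] := S_fam4 hb H11 H12 H13 uS1.
  have [b5 [b8 [d2 e2]]] := S_fam4 hb H21 H22 H23 uS2.
  by constructor 4; exists b, a5, a8, b5, b8.
Qed.

Theorem theorem4p1 (R : realType) (n : nat) (hn : (4 <= n)%N)
    (A S1 S2 : 'M[R[i]]_3)
    (hrep : homog3local_rep n A S1 S2)
    (hnontriv : ~ trivial_rep n A S1 S2) :
  exists A' S1' S2' : 'M[R[i]]_3,
    equiv_rep n A S1 S2 A' S1' S2' /\
    [\/ eps1 A' S1' S2', eps2 A' S1' S2', eps3 A' S1' S2' | eps4 A' S1' S2'].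
Proof.
have [m hm] : exists m, n = m.+4 by exists (n - 4)%N; lia.
subst n.
exists A, S1, S2; split; last exact: main_gen hrep hnontriv.
exists 1%:M; first exact: unitmx1.
by move=> i _; rewrite invmx1 !mul1mx !mulmx1.
Qed.
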